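(* Let $N$ be a positive integer and let $\psi(x)=a_1x^k+\cdots+a_kx$ be a polynomial with integer coefficients with $|a_1|,\ldots,|a_k|\le\log N$. Then for any $\theta\in\mathbb{T}$, $$\sum_{x=1}^N\psi^{\Delta}(x-1)e(\theta\psi(x))=\sum_{x=1}^{\psi(N)}e(\theta x)+O\big(\theta\,\psi(N)\psi^{\Delta}(N)\big),$$ where the implied constant depends only on $k$.
   Context: $\mathbb{T}=\mathbb{R}/\mathbb{Z}$ (in the error term $\theta$ denotes a real representative), $e(x)=e^{2\pi\sqrt{-1}x}$, and for a function $f$ on $\mathbb{Z}$, $f^{\Delta}(x)=f(x+1)-f(x)$. *)

(* Defs.v *)
From Stdlib Require Import Reals ZArith.
From Coquelicot Require Import Coquelicot.
Open Scope R_scope.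

Definition ee (t : R) : C := (cos (2 * PI * t), sin (2 * PI * t)).

Fixpoint csum (n : nat) (f : nat -> C) : C :=
  match n with
  | O => RtoC 0
  | S m => Cplus (csum m f) (f m)
  end.

Fixpoint zsum (n : nat) (f : nat -> Z) : Z :=
  match n with
  | O => 0%Z
  | S m => (zsum m f + f m)%Z
  end.

(* psi k a x = a_1 x^k + a_2 x^(k-1) + ... + a_k x  (coefficients a 1, ..., a k). *)
Definition psi (k : nat) (a : nat -> Z) (x : Z) : Z :=
  zsum k (fun j => (a (S j) * x ^ Z.of_nat (k - j))%Z).

Definition fdiff (f : Z -> Z) (x : Z) : Z := (f (x + 1) - f x)%Z.

(* Signed interval sum: sum_{x=1}^{M} e(theta x), with the standard convention
   sum_{x=1}^{M} = - sum_{x=M+1}^{0} when M < 0 (empty sum when M = 0). *)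
Definition esum_to (theta : R) (M : Z) : C :=
  if (0 <=? M)%Z
  then csum (Z.to_nat M) (fun j => ee (theta * INR (S j)))
  else Copp (csum (Z.to_nat (- M)) (fun j => ee (theta * IZR (M + 1 + Z.of_nat j)))).

(* Main.v *)
Require Import Defs.
From Stdlib Require Import Reals ZArith Lra Lia.
From Coquelicot Require Import Coquelicot.
Open Scope R_scope.

Lemma zsum_shift : forall m f, zsum (S m) f = (f O + zsum m (fun j => f (S j)))%Z.
Proof.
  induction m; intros f; simpl in *. lia.
  rewrite IHm. simpl. lia.
Qed.

Lemma psi_S : forall m a x,
  psi (S m) a x = (a 1%nat * x ^ Z.of_nat (S m) + psi m (fun i => a (S i)) x)%Z.
Proof.
  intros m a x. unfold psi. rewrite zsum_shift. reflexivity.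
Qed.

Lemma psi_0 : forall a x, psi 0 a x = 0%Z.
Proof. reflexivity. Qed.

Lemma IZR_pow : forall z n, IZR (z ^ Z.of_nat n) = IZR z ^ n.
Proof. intros. rewrite <- pow_IZR. reflexivity. Qed.

Definition cc (m : nat) (x : R) : R := (x + 1) ^ m - x ^ m.
Fixpoint ss (m : nat) (x : R) : R :=
  match m with O => 0 | S m' => ss m' x + cc (S m') x end.
Fixpoint tt (m : nat) (x : R) : R :=
  match m with O => 0 | S m' => tt m' x + x ^ (S m') end.

Lemma cc_S : forall m x, cc (S m) x = (x + 1) * cc m x + x ^ m.
Proof. intros. unfold cc. simpl. ring. Qed.

Lemma cc_nonneg_mono : forall m x y, 0 <= x -> x <= y -> 0 <= cc m x /\ cc m x <= cc m y.
Proof.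
  induction m; intros x y Hx Hxy.
  - unfold cc; simpl; lra.
  - rewrite !cc_S. destruct (IHm x y Hx Hxy) as [H1 H2].
    assert (0 <= x ^ m) by (apply pow_le; lra).
    assert (x ^ m <= y ^ m) by (apply pow_incr; lra).
    split. nra. nra.
Qed.

Lemma ss_nonneg_mono : forall m x y, 0 <= x -> x <= y -> 0 <= ss m x /\ ss m x <= ss m y.
Proof.
  induction m; intros x y Hx Hxy; simpl. lra.
  destruct (IHm x y Hx Hxy). destruct (cc_nonneg_mono (S m) x y Hx Hxy). lra.
Qed.

Lemma ss_bound : forall m x, 0 <= x -> x * ss m x <= cc (S m) x.
Proof.
  induction m; intros x Hx; simpl.
  - unfold cc; simpl; lra.
  - rewrite (cc_S (S m)). specialize (IHm x Hx).
    assert (0 <= x ^ S m) by (apply pow_le; lra).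
    destruct (cc_nonneg_mono (S m) x x Hx (Rle_refl _)). nra.
Qed.

Lemma tt_nonneg : forall m x, 0 <= x -> 0 <= tt m x.
Proof. induction m; intros; simpl. lra. specialize (IHm x H). assert (0 <= x * x ^ m) by (apply Rmult_le_pos; [lra| apply pow_le; lra]). lra. Qed.

Lemma tt_bound : forall m x, 1 <= x -> (x - 1) * tt m x <= x ^ S m.
Proof.
  induction m; intros x Hx; simpl.
  - lra.
  - specialize (IHm x Hx). simpl in IHm.
    assert (0 <= x * x ^ m) by (apply Rmult_le_pos; [lra| apply pow_le; lra]). nra.
Qed.

Lemma cc_upper : forall m x, 1 <= x -> cc (S m) x <= (2 ^ S m - 1) * x ^ m.
Proof.
  induction m; intros x Hx.
  - unfold cc; simpl; lra.
  - rewrite cc_S. specialize (IHm x Hx).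
    assert (0 <= x ^ m) by (apply pow_le; lra).
    assert (1 <= 2 ^ S m) by (apply pow_R1_Rle; lra).
    destruct (cc_nonneg_mono (S m) x x ltac:(lra) (Rle_refl _)).
    simpl in *.
    assert (A1: (x + 1) * cc (S m) x <= (x+1) * ((2 * 2 ^ m - 1) * x ^ m)) by (apply Rmult_le_compat_l; lra).
    assert (A2: (x+1) * ((2 * 2 ^ m - 1) * x ^ m) <= (2*x) * ((2 * 2 ^ m - 1) * x ^ m)) by (apply Rmult_le_compat_r; [apply Rmult_le_pos|]; lra).
    replace ((2 * (2 * 2 ^ m) - 1) * (x * x ^ m)) with ((2*x) * ((2 * 2 ^ m - 1) * x ^ m) + x * x^m) by ring.
    lra.
Qed.

Lemma bound_psi : forall m b B x, (0 <= x)%Z ->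
  (forall i, (1 <= i <= m)%nat -> Rabs (IZR (b i)) <= B) ->
  Rabs (IZR (psi m b x)) <= B * tt m (IZR x).
Proof.
  induction m; intros b B x Hx Hb.
  - rewrite psi_0. simpl. rewrite Rabs_R0. lra.
  - rewrite psi_S, plus_IZR, mult_IZR, IZR_pow. simpl tt.
    assert (H1 := Hb 1%nat ltac:(lia)).
    assert (H2 := IHm (fun i => b (S i)) B x Hx ltac:(intros i Hi; apply Hb; lia)).
    assert (0 <= IZR x) by (apply IZR_le; lia).
    assert (0 <= IZR x ^ S m) by (apply pow_le; lra).
    eapply Rle_trans. apply Rabs_triang. rewrite Rabs_mult, (Rabs_right (IZR x ^ S m)) by lra.
    assert (Rabs (IZR (b 1%nat)) * IZR x ^ S m <= B * IZR x ^ S m) by (apply Rmult_le_compat_r; lra).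
    simpl pow in *. rewrite Rmult_plus_distr_l. lra.
Qed.

Lemma fdiff_psi_S : forall m a x,
  fdiff (psi (S m) a) x = (a 1%nat * ((x+1) ^ Z.of_nat (S m) - x ^ Z.of_nat (S m)) + fdiff (psi m (fun i => a (S i))) x)%Z.
Proof. intros. unfold fdiff. rewrite !psi_S. ring. Qed.

Lemma bound_fdiff : forall m b B x, (0 <= x)%Z ->
  (forall i, (1 <= i <= m)%nat -> Rabs (IZR (b i)) <= B) ->
  Rabs (IZR (fdiff (psi m b) x)) <= B * ss m (IZR x).
Proof.
  induction m; intros b B x Hx Hb.
  - unfold fdiff. rewrite !psi_0. simpl. rewrite Rabs_R0. lra.
  - rewrite fdiff_psi_S, plus_IZR, mult_IZR, minus_IZR, !IZR_pow, plus_IZR. simpl ss.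
    assert (H1 := Hb 1%nat ltac:(lia)).
    assert (H2 := IHm (fun i => b (S i)) B x Hx ltac:(intros i Hi; apply Hb; lia)).
    assert (0 <= IZR x) by (apply IZR_le; lia).
    destruct (cc_nonneg_mono (S m) (IZR x) (IZR x) ltac:(lra) (Rle_refl _)).
    unfold cc in *.
    eapply Rle_trans. apply Rabs_triang. rewrite Rabs_mult, (Rabs_right ((IZR x + 1) ^ S m - IZR x ^ S m)) by lra.
    assert (Rabs (IZR (b 1%nat)) * ((IZR x + 1) ^ S m - IZR x ^ S m) <= B * ((IZR x + 1) ^ S m - IZR x ^ S m)) by (apply Rmult_le_compat_r; lra).
    lra.
Qed.

Lemma ln_le_m1 : forall y, 0 < y -> ln y <= y - 1.
Proof.
  intros y Hy. destruct (Req_dec (ln y) 0) as [E|E].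
  - assert (y = 1). { rewrite <- (exp_ln y Hy), E. apply exp_0. } lra.
  - pose proof (exp_ineq1 _ E). rewrite exp_ln in H; lra.
Qed.

Lemma ln_key : forall n, 0 < n -> 1 <= ln n -> ln n <= 4/5 * (n - 1).
Proof.
  intros n Hn H1.
  set (r := sqrt n).
  assert (Hr : 0 < r) by (apply sqrt_lt_R0; lra).
  assert (Hrr : r * r = n) by (apply sqrt_sqrt; lra).
  assert (ln n = ln r + ln r) by (rewrite <- Hrr; apply ln_mult; lra).
  pose proof (ln_le_m1 r Hr).
  nra.
Qed.

Fixpoint rsum (n : nat) (f : nat -> R) : R :=
  match n with O => 0 | S m => rsum m f + f m end.

Lemma rsum_le : forall n f g, (forall j, (j < n)%nat -> f j <= g j) -> rsum n f <= rsum n g.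
Proof. induction n; intros f g H; simpl. lra. pose proof (H n ltac:(lia)). pose proof (IHn f g ltac:(intros; apply H; lia)). lra. Qed.

Lemma rsum_const : forall n c, rsum n (fun _ => c) = INR n * c.
Proof. induction n; intros; simpl rsum. simpl; ring. rewrite IHn, S_INR. ring. Qed.

Lemma Zabs_ge1 : forall z, z <> 0%Z -> 1 <= Rabs (IZR z).
Proof. intros z Hz. rewrite <- abs_IZR. apply IZR_le. lia. Qed.

Lemma keyQ : forall k (a : nat -> Z) (N : nat), (1 <= N)%nat ->
  (forall i, (1 <= i <= k)%nat -> Rabs (IZR (a i)) <= ln (INR N)) ->
  rsum N (fun j => IZR (fdiff (psi k a) (Z.of_nat j)) ^ 2)
  <= 100 * 2 ^ k * (Rabs (IZR (psi k a (Z.of_nat N))) * Rabs (IZR (fdiff (psi k a) (Z.of_nat N)))).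
Proof.
  induction k as [|m IH]; intros a N HN Ha.
  - simpl. unfold fdiff. rewrite (rsum_le N _ (fun _ => 0)).
    + rewrite rsum_const, psi_0. rewrite Rabs_R0. lra.
    + intros j _. rewrite !psi_0. simpl. lra.
  - destruct (Z.eq_dec (a 1%nat) 0) as [Z0|NZ].
    + assert (Hp : forall x, psi (S m) a x = psi m (fun i => a (S i)) x).
      { intros x. rewrite psi_S, Z0. lia. }
      assert (Hf : forall x, fdiff (psi (S m) a) x = fdiff (psi m (fun i => a (S i))) x).
      { intros x. unfold fdiff. rewrite !Hp. reflexivity. }
      rewrite (rsum_le N _ (fun j => IZR (fdiff (psi m (fun i => a (S i))) (Z.of_nat j)) ^ 2)).
      2:{ intros j _. rewrite Hf. lra. }
      rewrite Hp, Hf.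
      eapply Rle_trans. apply IH; auto. intros i Hi; apply Ha; lia.
      apply Rmult_le_compat_r. apply Rmult_le_pos; apply Rabs_pos.
      simpl. pose proof (pow_le 2 m). lra.
    +
      set (n := INR N).
      set (A := Rabs (IZR (a 1%nat))).
      set (L := ln n).
      assert (HA : 1 <= A) by (apply Zabs_ge1; auto).
      assert (HAL : A <= L) by (apply Ha; lia).
      assert (Hn1 : 1 <= n) by (unfold n; apply (le_INR 1); lia).
      assert (HL : L <= 4/5 * (n - 1)) by (apply ln_key; [lra| fold L; lra]).
      set (b := fun i => a (S i)).
      assert (Hb : forall i, (1 <= i <= m)%nat -> Rabs (IZR (b i)) <= L).
      { intros i Hi. apply Ha. lia. }
      assert (HNz : IZR (Z.of_nat N) = n) by (unfold n; rewrite <- INR_IZR_INZ; reflexivity).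
      assert (Hpsi : 1/5 * A * n ^ S m <= Rabs (IZR (psi (S m) a (Z.of_nat N)))).
      { rewrite psi_S, plus_IZR, mult_IZR, IZR_pow, HNz.
        pose proof (bound_psi m b L (Z.of_nat N) ltac:(lia) Hb) as Hq. rewrite HNz in Hq.
        pose proof (tt_bound m n Hn1). pose proof (tt_nonneg m n ltac:(lra)).
        assert (0 <= n ^ S m) by (apply pow_le; lra).
        assert (L * tt m n <= 4/5 * n ^ S m).
        { apply Rle_trans with (4/5 * (n-1) * tt m n). apply Rmult_le_compat_r; lra. nra. }
        assert (Rabs (IZR (a 1%nat) * n ^ S m) = A * n ^ S m) by (rewrite Rabs_mult, (Rabs_right (n ^ S m)); [unfold A; ring | lra]).
        pose proof (Rabs_triang_inv (IZR (a 1%nat) * n ^ S m) (- IZR (psi m b (Z.of_nat N)))).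
        rewrite Rabs_Ropp in H4. unfold Rminus in H4. rewrite Ropp_involutive in H4.
        assert (A * n ^ S m <= A * n ^ S m) by lra. fold b. assert (n ^ S m <= A * n ^ S m) by nra. lra. }
      assert (Hfd : 1/5 * A * cc (S m) n <= Rabs (IZR (fdiff (psi (S m) a) (Z.of_nat N)))).
      { rewrite fdiff_psi_S, plus_IZR, mult_IZR, minus_IZR, !IZR_pow, plus_IZR, HNz.
        pose proof (bound_fdiff m b L (Z.of_nat N) ltac:(lia) Hb) as Hq. rewrite HNz in Hq.
        pose proof (ss_bound m n ltac:(lra)). destruct (ss_nonneg_mono m n n ltac:(lra) (Rle_refl _)).
        destruct (cc_nonneg_mono (S m) n n ltac:(lra) (Rle_refl _)).
        assert (L * ss m n <= 4/5 * cc (S m) n).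
        { apply Rle_trans with (4/5 * n * ss m n). apply Rmult_le_compat_r; lra. nra. }
        unfold cc in *.
        assert (Rabs (IZR (a 1%nat) * ((n+1) ^ S m - n ^ S m)) = A * ((n+1) ^ S m - n ^ S m)) by (rewrite Rabs_mult, (Rabs_right ((n+1) ^ S m - n ^ S m)); [unfold A; ring | lra]).
        pose proof (Rabs_triang_inv (IZR (a 1%nat) * ((n+1) ^ S m - n ^ S m)) (- IZR (fdiff (psi m b) (Z.of_nat N)))).
        rewrite Rabs_Ropp in H6. unfold Rminus in H6. rewrite Ropp_involutive in H6.
        fold b. unfold Rminus in *. set (X := (n + 1) ^ S m + - n ^ S m) in *. assert (X <= A * X) by nra. lra. }
      destruct (cc_nonneg_mono (S m) n n ltac:(lra) (Rle_refl _)) as [Hc0 _].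
      assert (Hup : forall j, (j < N)%nat -> Rabs (IZR (fdiff (psi (S m) a) (Z.of_nat j))) <= 2 * A * cc (S m) n).
      { intros j Hj.
        assert (Hjn : 0 <= INR j <= n) by (split; [apply pos_INR| unfold n; apply le_INR; lia]).
        assert (HjZ : IZR (Z.of_nat j) = INR j) by (rewrite <- INR_IZR_INZ; reflexivity).
        rewrite fdiff_psi_S, plus_IZR, mult_IZR, minus_IZR, !IZR_pow, plus_IZR, HjZ.
        pose proof (bound_fdiff m b L (Z.of_nat j) ltac:(lia) Hb) as Hq. rewrite HjZ in Hq.
        pose proof (ss_bound m n ltac:(lra)). destruct (ss_nonneg_mono m (INR j) n ltac:(lra) ltac:(lra)).
        destruct (cc_nonneg_mono (S m) (INR j) n ltac:(lra) ltac:(lra)).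
        assert (L * ss m n <= cc (S m) n).
        { apply Rle_trans with (n * ss m n). apply Rmult_le_compat_r; lra. lra. }
        assert (L * ss m (INR j) <= L * ss m n) by (apply Rmult_le_compat_l; lra).
        assert (A * cc (S m) (INR j) <= A * cc (S m) n) by (apply Rmult_le_compat_l; lra).
        unfold cc in *.
        eapply Rle_trans. apply Rabs_triang.
        rewrite Rabs_mult, (Rabs_right ((INR j+1) ^ S m - INR j ^ S m)) by lra.
        fold A. fold b. set (X := (n + 1) ^ S m - n ^ S m) in *. assert (X <= A * X) by nra. lra. }
      apply Rle_trans with (rsum N (fun _ => (2 * A * cc (S m) n) ^ 2)).
      { apply rsum_le. intros j Hj. specialize (Hup j Hj).
        rewrite <- (pow2_abs (IZR _)). apply pow_incr. split. apply Rabs_pos. exact Hup. }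
      rewrite rsum_const. fold n.
      pose proof (cc_upper m n Hn1).
      assert (Hnc : n * cc (S m) n <= 2 ^ S m * n ^ S m).
      { assert (0 <= n ^ m) by (apply pow_le; lra).
        apply Rle_trans with (n * ((2 ^ S m - 1) * n ^ m)). apply Rmult_le_compat_l; lra.
        simpl. nra. }
      assert (0 <= 2 ^ S m) by (apply pow_le; lra).
      assert (0 <= n ^ S m) by (apply pow_le; lra).
      apply Rle_trans with (4 * A * A * cc (S m) n * (2 ^ S m * n ^ S m)).
      { replace (n * (2 * A * cc (S m) n) ^ 2) with (4 * A * A * cc (S m) n * (n * cc (S m) n)) by ring.
        apply Rmult_le_compat_l. apply Rmult_le_pos; [|lra]. nra. exact Hnc. }
      apply Rle_trans with (100 * 2 ^ S m * ((1/5 * A * n ^ S m) * (1/5 * A * cc (S m) n))).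
      { right. field. }
      apply Rmult_le_compat_l. nra.
      apply Rmult_le_compat; try nra.
Qed.

Lemma sin_abs_le : forall x, Rabs (sin x) <= Rabs x.
Proof.
  intros x. pose proof (bounded_variation sin cos 1 0 x) as H.
  rewrite sin_0, !Rminus_0_r in H. rewrite Rmult_1_l in H. apply H.
  intros t _. split. apply is_derive_sin. pose proof (COS_bound t). apply Rabs_le. lra.
Qed.

Lemma ee_diff : forall u v, Cmod (Cminus (ee u) (ee v)) <= 2 * PI * Rabs (u - v).
Proof.
  intros u v. unfold ee, Cmod, Cminus, Cplus, Copp. simpl fst; simpl snd.
  set (al := 2 * PI * u). set (be := 2 * PI * v).
  replace (2 * PI * Rabs (u - v)) with (Rabs (al - be)).
  2:{ unfold al, be. rewrite <- Rmult_minus_distr_l, Rabs_mult, (Rabs_right (2*PI)). auto.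
      pose proof PI_RGT_0. lra. }
  set (h := (al - be) / 2).
  assert (Hab : al - be = 2 * h) by (unfold h; field).
  assert (Hc : cos (al - be) = cos al * cos be + sin al * sin be) by apply cos_minus.
  assert (Hc2 : cos (al - be) = 1 - 2 * sin h * sin h) by (rewrite Hab; apply cos_2a_sin).
  pose proof (sin2_cos2 al). pose proof (sin2_cos2 be). unfold Rsqr in *.
  assert (Hs : Rabs (sin h) <= Rabs h) by apply sin_abs_le.
  assert (Hs2 : sin h * sin h <= h * h).
  { pose proof (Rabs_pos (sin h)). pose proof (Rabs_pos h).
    assert (sin h * sin h = Rabs (sin h) * Rabs (sin h)) by (rewrite <- Rabs_mult; symmetry; apply Rabs_right; nra).
    assert (h * h = Rabs h * Rabs h) by (rewrite <- Rabs_mult; symmetry; apply Rabs_right; nra).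
    nra. }
  rewrite <- sqrt_Rsqr_abs. apply sqrt_le_1_alt. unfold Rsqr. rewrite Hab. nra.
Qed.

Ltac Ceq := apply injective_projections; simpl; ring.

Lemma csum_shift : forall n (g : nat -> C), csum (S n) g = Cplus (g O) (csum n (fun j => g (S j))).
Proof.
  induction n; intros g.
  - simpl. Ceq.
  - change (csum (S (S n)) g) with (Cplus (csum (S n) g) (g (S n))).
    rewrite IHn. simpl. Ceq.
Qed.

Lemma csum_S : forall n (f : nat -> C), csum (S n) f = Cplus (csum n f) (f n).
Proof. reflexivity. Qed.

Lemma csum_ext : forall n (f g : nat -> C), (forall j, f j = g j) -> csum n f = csum n g.
Proof. induction n; intros f g H; simpl; auto. rewrite (IHn f g H), H. auto. Qed.

Lemma Estep : forall theta m, esum_to theta (m + 1) = Cplus (esum_to theta m) (ee (theta * IZR (m + 1))).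
Proof.
  intros theta m. unfold esum_to.
  destruct (Z_lt_le_dec m (-1)) as [Hm|Hm]; [|destruct (Z.eq_dec m (-1)) as [E|E]].
  - replace (0 <=? m + 1)%Z with false by (symmetry; apply Z.leb_gt; lia).
    replace (0 <=? m)%Z with false by (symmetry; apply Z.leb_gt; lia).
    replace (Z.to_nat (- m)) with (S (Z.to_nat (- (m + 1)))) by lia.
    rewrite csum_shift.
    rewrite (csum_ext _ (fun j => ee (theta * IZR (m + 1 + Z.of_nat (S j))))
                        (fun j => ee (theta * IZR (m + 1 + 1 + Z.of_nat j)))).
    2:{ intros j. f_equal. f_equal. f_equal. lia. }
    replace (m + 1 + Z.of_nat 0)%Z with (m + 1)%Z by lia.
    Ceq.
  - subst m. simpl. Ceq.
  - replace (0 <=? m + 1)%Z with true by (symmetry; apply Z.leb_le; lia).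
    replace (0 <=? m)%Z with true by (symmetry; apply Z.leb_le; lia).
    replace (Z.to_nat (m + 1)) with (S (Z.to_nat m)) by lia.
    rewrite csum_S. f_equal. f_equal. f_equal.
    rewrite S_INR, INR_IZR_INZ, Z2Nat.id by lia. rewrite plus_IZR. reflexivity.
Qed.

Definition GG (theta : R) (p q : Z) : C :=
  Cminus (Cmult (RtoC (IZR (q - p))) (ee (theta * IZR q)))
         (Cminus (esum_to theta q) (esum_to theta p)).

Lemma ee_diffZ : forall theta p q, Cmod (Cminus (ee (theta * IZR q)) (ee (theta * IZR p))) <= 2 * PI * Rabs theta * Rabs (IZR (q - p)).
Proof.
  intros. eapply Rle_trans. apply ee_diff.
  rewrite minus_IZR, <- Rmult_minus_distr_l, Rabs_mult. right. ring.
Qed.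

Lemma GG_down : forall theta q n, Cmod (GG theta (q - Z.of_nat n) q) <= 2 * PI * Rabs theta * (INR n) ^ 2.
Proof.
  intros theta q n. pose proof PI_RGT_0. pose proof (Rabs_pos theta).
  induction n.
  - unfold GG. replace (q - Z.of_nat 0)%Z with q by lia. replace (q - q)%Z with 0%Z by lia.
    replace (Cminus (Cmult (RtoC (IZR 0)) (ee (theta * IZR q))) (Cminus (esum_to theta q) (esum_to theta q))) with (RtoC 0) by Ceq.
    rewrite Cmod_0. simpl. nra.
  - set (p := (q - Z.of_nat n)%Z) in *.
    replace (q - Z.of_nat (S n))%Z with (p - 1)%Z by lia.
    assert (HE := Estep theta (p - 1)). replace (p - 1 + 1)%Z with p in HE by lia.
    assert (GG theta (p - 1) q = Cplus (GG theta p q) (Cminus (ee (theta * IZR q)) (ee (theta * IZR p)))).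
    { unfold GG. rewrite HE. rewrite !minus_IZR. Ceq. }
    rewrite H1. eapply Rle_trans. apply Cmod_triangle.
    pose proof (ee_diffZ theta p q). replace (q - p)%Z with (Z.of_nat n) in H2 by lia.
    rewrite <- INR_IZR_INZ, (Rabs_right (INR n)) in H2 by apply Rle_ge, pos_INR.
    rewrite S_INR. pose proof (pos_INR n).
    assert (2 * PI * Rabs theta * INR n <= 2 * PI * Rabs theta * (2 * INR n + 1)).
    { apply Rmult_le_compat_l. nra. lra. }
    replace (2 * PI * Rabs theta * (INR n + 1) ^ 2) with (2 * PI * Rabs theta * INR n ^ 2 + 2 * PI * Rabs theta * (2 * INR n + 1)) by ring.
    lra.
Qed.

Lemma GG_up : forall theta q n, Cmod (GG theta (q + Z.of_nat n) q) <= 2 * PI * Rabs theta * (INR n) ^ 2.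
Proof.
  intros theta q n. pose proof PI_RGT_0. pose proof (Rabs_pos theta).
  induction n.
  - unfold GG. replace (q + Z.of_nat 0)%Z with q by lia. replace (q - q)%Z with 0%Z by lia.
    replace (Cminus (Cmult (RtoC (IZR 0)) (ee (theta * IZR q))) (Cminus (esum_to theta q) (esum_to theta q))) with (RtoC 0) by Ceq.
    rewrite Cmod_0. simpl. nra.
  - set (p := (q + Z.of_nat n)%Z) in *.
    replace (q + Z.of_nat (S n))%Z with (p + 1)%Z by lia.
    assert (HE := Estep theta p).
    assert (GG theta (p + 1) q = Cplus (GG theta p q) (Copp (Cminus (ee (theta * IZR q)) (ee (theta * IZR (p + 1)))))).
    { unfold GG. rewrite HE. rewrite !minus_IZR, !plus_IZR. Ceq. }
    rewrite H1. eapply Rle_trans. apply Cmod_triangle. rewrite Cmod_opp.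
    pose proof (ee_diffZ theta (p + 1) q). replace (q - (p + 1))%Z with (- Z.of_nat (S n))%Z in H2 by lia.
    rewrite Ropp_Ropp_IZR, Rabs_Ropp, <- INR_IZR_INZ, (Rabs_right (INR (S n))) in H2 by apply Rle_ge, pos_INR.
    rewrite S_INR in *. pose proof (pos_INR n).
    assert (2 * PI * Rabs theta * (INR n + 1) <= 2 * PI * Rabs theta * (2 * INR n + 1)).
    { apply Rmult_le_compat_l. nra. lra. }
    replace (2 * PI * Rabs theta * (INR n + 1) ^ 2) with (2 * PI * Rabs theta * INR n ^ 2 + 2 * PI * Rabs theta * (2 * INR n + 1)) by ring.
    lra.
Qed.

Lemma GG_bound : forall theta p q, Cmod (GG theta p q) <= 2 * PI * Rabs theta * IZR (q - p) ^ 2.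
Proof.
  intros theta p q. destruct (Z_le_gt_dec p q).
  - pose proof (GG_down theta q (Z.to_nat (q - p))).
    rewrite Z2Nat.id in H by lia. replace (q - (q - p))%Z with p in H by lia.
    rewrite INR_IZR_INZ, Z2Nat.id in H by lia. exact H.
  - pose proof (GG_up theta q (Z.to_nat (p - q))).
    rewrite Z2Nat.id in H by lia. replace (q + (p - q))%Z with p in H by lia.
    rewrite INR_IZR_INZ, Z2Nat.id in H by lia.
    replace (q - p)%Z with (- (p - q))%Z by lia. rewrite Ropp_Ropp_IZR. 
    replace ((- IZR (p - q)) ^ 2) with (IZR (p - q) ^ 2) by ring. exact H.
Qed.

Lemma psi_at0 : forall k a, psi k a 0 = 0%Z.
Proof.
  induction k; intros a. reflexivity.
  rewrite psi_S, IHk, Z.pow_0_l by lia. lia.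
Qed.

Lemma telescope : forall theta (P : nat -> Z) (F : nat -> C), P O = 0%Z -> forall N,
  Cminus (csum N F) (esum_to theta (P N)) =
  csum N (fun j => Cminus (F j) (Cminus (esum_to theta (P (S j))) (esum_to theta (P j)))).
Proof.
  intros theta P F H0. induction N.
  - simpl. rewrite H0. unfold esum_to. simpl. Ceq.
  - rewrite !csum_S, <- IHN. Ceq.
Qed.

Lemma Cmod_csum : forall N f, Cmod (csum N f) <= rsum N (fun j => Cmod (f j)).
Proof.
  induction N; intros f; simpl. rewrite Cmod_0. lra.
  eapply Rle_trans. apply Cmod_triangle. specialize (IHN f). lra.
Qed.

Lemma rsum_scale : forall N c f, rsum N (fun j => c * f j) = c * rsum N f.
Proof. induction N; intros; simpl. ring. rewrite IHN. ring. Qed.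

Theorem lemma2p3 :
  forall k : nat, (1 <= k)%nat ->
  exists Ck : R, 0 < Ck /\
  forall (N : nat) (a : nat -> Z) (theta : R),
    (1 <= N)%nat ->
    (forall i : nat, (1 <= i <= k)%nat -> Rabs (IZR (a i)) <= ln (INR N)) ->
    Cmod (Cminus
            (csum N (fun j =>
               Cmult (RtoC (IZR (fdiff (psi k a) (Z.of_nat j))))
                     (ee (theta * IZR (psi k a (Z.of_nat (S j)))))))
            (esum_to theta (psi k a (Z.of_nat N))))
    <= Ck * (Rabs theta * Rabs (IZR (psi k a (Z.of_nat N)))
                        * Rabs (IZR (fdiff (psi k a) (Z.of_nat N)))).
Proof.
  intros k _. exists (2 * PI * (100 * 2 ^ k)). split.
  { pose proof PI_RGT_0. pose proof (pow_lt 2 k ltac:(lra)). nra. }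
  intros N a theta HN Ha.
  rewrite (telescope theta (fun j => psi k a (Z.of_nat j))) by apply psi_at0.
  eapply Rle_trans. apply Cmod_csum.
  apply Rle_trans with (rsum N (fun j => 2 * PI * Rabs theta * (IZR (fdiff (psi k a) (Z.of_nat j)) ^ 2))).
  { apply rsum_le. intros j _.
    assert (Hf : fdiff (psi k a) (Z.of_nat j) = (psi k a (Z.of_nat (S j)) - psi k a (Z.of_nat j))%Z).
    { unfold fdiff. replace (Z.of_nat j + 1)%Z with (Z.of_nat (S j)) by lia. reflexivity. }
    rewrite Hf. apply GG_bound. }
  rewrite rsum_scale.
  pose proof (keyQ k a N HN Ha).
  assert (0 <= 2 * PI * Rabs theta) by (pose proof PI_RGT_0; pose proof (Rabs_pos theta); nra).
  apply Rle_trans with (2 * PI * Rabs theta * (100 * 2 ^ k * (Rabs (IZR (psi k a (Z.of_nat N))) * Rabs (IZR (fdiff (psi k a) (Z.of_nat N)))))).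
  apply Rmult_le_compat_l; auto.
  right. ring.
Qed.
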